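(* If there exist integer weights $w_1,\ldots,w_n$ such that $|w(2^{[n]})|=a$ and $\beta(w)=b$, then there exists a uniquely decodable code pair $(A,B)$ with $A,B\subseteq\{0,1\}^n$, $|A|=a$ and $|B|=b$.
   Context: For $X\subseteq[n]$, $w(X)=\sum_{i\in X}w_i$ and $w(2^{[n]})=\{w(X):X\subseteq[n]\}$; $\beta(w)=\max_{x\in\mathbb{Z}}|\{S\subseteq[n]:w(S)=x\}|$. A pair $(A,B)$ with $A,B\subseteq\{0,1\}^n$ is a uniquely decodable code pair if $|A+B|=|\{a+b:a\in A,b\in B\}|=|A|\cdot|B|$, where addition is over $\mathbb{Z}^n$ (not modulo 2). *)

(* Defs.v *)
From mathcomp Require Import all_boot all_order all_algebra.
Set Implicit Arguments. Unset Strict Implicit. Unset Printing Implicit Defensive.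
Import GRing.Theory Num.Theory.
Local Open Scope ring_scope.

Definition wsum (n : nat) (w : 'I_n -> int) (X : {set 'I_n}) : int :=
  \sum_(i in X) w i.

Definition num_subset_sums (n : nat) (w : 'I_n -> int) : nat :=
  size (undup [seq wsum w X | X <- enum {set 'I_n}]).

(* beta(w) = max_{x in Z} #{S : w(S) = x}; values x not attained contribute 0
   and some x is always attained, so the max ranges over attained sums. *)
Definition beta (n : nat) (w : 'I_n -> int) : nat :=
  \max_(S : {set 'I_n}) #|[set T : {set 'I_n} | wsum w T == wsum w S]|.

Definition bvec (n : nat) := {ffun 'I_n -> bool}.

(* coordinatewise sum over Z^n (not mod 2), as a list of n integers *)
Definition vadd (n : nat) (a b : bvec n) : seq int :=
  [seq (a i)%:Z + (b i)%:Z | i <- enum 'I_n].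

Definition sumset (n : nat) (A B : {set bvec n}) : seq (seq int) :=
  undup [seq vadd a b | a <- enum A, b <- enum B].

Definition UD_pair (n : nat) (A B : {set bvec n}) : Prop :=
  size (sumset A B) = (#|A| * #|B|)%N.

(* Main.v *)
Require Import Defs.
From mathcomp Require Import all_boot all_order all_algebra.
Set Implicit Arguments. Unset Strict Implicit. Unset Printing Implicit Defensive.
Import GRing.Theory Num.Theory.

Lemma size_undup_map_eqrel (T1 T2 T3 : eqType) (f : T1 -> T2) (g : T1 -> T3)
  (s : seq T1) :
  (forall x y, (f x == f y) = (g x == g y)) ->
  size (undup (map f s)) = size (undup (map g s)).
Proof.
move=> H; elim: s => [|x s IH] //=.
have -> : (f x \in map f s) = (g x \in map g s).
  apply/mapP/mapP => -[y ys e]; exists y => //; apply/eqP.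
    by rewrite -H e eqxx.
  by rewrite H e eqxx.
by case: (g x \in map g s) => //=; rewrite IH.
Qed.

Definition toB n (X : {set 'I_n}) : bvec n := [ffun i => i \in X].

Lemma toB_inj n : injective (@toB n).
Proof.
move=> X Y e; apply/setP => i.
by have := congr1 (fun f : bvec n => f i) e; rewrite /toB !ffunE.
Qed.

Lemma wsumE n (w : 'I_n -> int) X :
  wsum w X = (\sum_i w i * ((toB X i)%:Z))%R.
Proof.
rewrite /wsum big_mkcond /=; apply: eq_bigr => i _.
by rewrite /toB ffunE; case: (i \in X); rewrite ?mulr1 ?mulr0.
Qed.

Theorem proposition4 (n a b : nat) :
  (exists w : 'I_n -> int, num_subset_sums w = a /\ beta w = b) ->
  exists A B : {set bvec n}, [/\ UD_pair A B, #|A| = a & #|B| = b].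
Proof.
move=> [w [Ha Hb]].
pose canon (X : {set 'I_n}) := odflt X [pick Y | wsum w Y == wsum w X].
have canonE X : wsum w (canon X) = wsum w X.
  rewrite /canon; case: pickP => [Y /= /eqP -> | _] //.
have canon_eq X Y : (canon X == canon Y) = (wsum w X == wsum w Y).
  apply/idP/idP => /eqP e; apply/eqP; first by rewrite -canonE e canonE.
  rewrite /canon; have -> : [pick Z | wsum w Z == wsum w X] = [pick Z | wsum w Z == wsum w Y] by rewrite e.
  case: pickP => //= H; by have := H Y; rewrite eqxx.
have h0 : (0 < #|{: {set 'I_n}}|)%N by apply/card_gt0P; exists set0.
have [S0 HS0] := @eq_bigmax {set 'I_n}
  (fun S => #|[set T : {set 'I_n} | wsum w T == wsum w S]|) h0.
pose c := wsum w S0.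
pose BT := [set T : {set 'I_n} | wsum w T == c].
exists [set toB (canon X) | X : {set 'I_n}], [set toB T | T in BT].
have key : forall a1 a2 b1 b2, a1 \in [set toB (canon X) | X : {set 'I_n}] ->
   a2 \in [set toB (canon X) | X : {set 'I_n}] -> b1 \in [set toB T | T in BT] ->
   b2 \in [set toB T | T in BT] -> vadd a1 b1 = vadd a2 b2 -> a1 = a2 /\ b1 = b2.
  move=> a1 a2 b1 b2 /imsetP[X1 _ ->] /imsetP[X2 _ ->] /imsetP[T1 HT1 ->] /imsetP[T2 HT2 ->].
  move/eq_in_map => E.
  have E' i : ((toB (canon X1) i)%:Z + (toB T1 i)%:Z = (toB (canon X2) i)%:Z + (toB T2 i)%:Z)%R.
    by apply: E; rewrite mem_enum.
  have ws : (wsum w (canon X1) + wsum w T1 = wsum w (canon X2) + wsum w T2)%R.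
    rewrite !wsumE -!big_split /=; apply: eq_bigr => i _.
    by rewrite -!mulrDr E'.
  move: HT1 HT2; rewrite !inE => /eqP h1 /eqP h2.
  move: ws; rewrite h1 h2 => /addIr; rewrite !canonE => /eqP.
  rewrite -canon_eq => /eqP ce; rewrite ce; split => //.
  congr toB; apply/toB_inj/ffunP => i; have := E' i; rewrite ce => /addrI.
  by case: (toB T1 i); case: (toB T2 i).
split.
- rewrite /UD_pair /sumset undup_id ?size_allpairs -?cardE //.
  apply: allpairs_uniq; rewrite ?enum_uniq //.
  move=> [x1 y1] [x2 y2] /allpairsP[[p1 q1] [/= hp1 hq1 [-> ->]]]
    /allpairsP[[p2 q2] [/= hp2 hq2 [-> ->]]] /= e.
  rewrite mem_enum in hp1; rewrite mem_enum in hq1;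
  rewrite mem_enum in hp2; rewrite mem_enum in hq2.
  by have [-> ->] := key _ _ _ _ hp1 hp2 hq1 hq2 e.
- rewrite -Ha /num_subset_sums (@size_undup_map_eqrel _ _ _ _ (fun X => toB (canon X))); last first.
    by move=> X Y; rewrite (inj_eq (@toB_inj n)) canon_eq.
  rewrite -(card_uniqP (undup_uniq _)); apply: eq_card => y.
  rewrite mem_undup; apply/imsetP/mapP => -[X hX ->]; exists X => //.
  by rewrite mem_enum.
- by rewrite card_imset; [rewrite -Hb /beta HS0 | exact: toB_inj].
Qed.
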